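(* For each $j\ge0$ the polynomial $c_j(q)$ has degree $j$, leading coefficient $(-1)^jj!\,G_j$ and constant term $B_j$. Moreover, in $\mathbb Q[q][[t]]$, \[ \sum_{j\ge0}c_j(q)\frac{t^j}{j!}=\frac{t}{(1-qt)^{-1/q}-1}. \]
   Context: Let $q$ be a variable. For $a$ in a commutative ring, $k$ in it and $i\in\mathbb N_0$, $(a)_{k,i}=a(a+k)\cdots(a+(i-1)k)$ (with $(a)_{k,0}=1$). The sequence $(c_i(q))_{i\ge0}$ in $\mathbb Q[q]$ is defined recursively by $\sum_{i=0}^{j}\frac{(1)_{q,j+1-i}}{(j+1-i)!}\frac{c_i(q)}{i!}=\delta_{j,0}$ for all $j\ge0$ (so $c_0=1$). The Bernoulli numbers $B_j$ are defined by $\sum_{i=0}^{j}\binom{j+1}{i}B_i=\delta_{j,0}$ for $j\ge0$. The Gregory coefficients $G_j$ are defined by $\sum_{j\ge0}G_jt^j=t/\ln(1+t)$ (so $G_0=1$, $G_1=1/2$, $G_2=-1/12$). *)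

(* Defs.v *)
From mathcomp Require Import all_boot all_order all_algebra.
Set Implicit Arguments.
Unset Strict Implicit.
Unset Printing Implicit Defensive.
Import Order.TTheory GRing.Theory Num.Theory.
Local Open Scope ring_scope.

(* Formal power series in t with coefficients in R are represented by their
   coefficient sequences nat -> R. *)

Definition smul (R : comPzRingType) (A B : nat -> R) : nat -> R :=
  fun n => \sum_(i < n.+1) A i * B (n - i)%N.

Definition sderiv (R : comPzRingType) (A : nat -> R) : nat -> R :=
  fun n => A n.+1 *+ n.+1.

Definition sone (R : comPzRingType) : nat -> R := fun n => (n == 0%N)%:R.
Definition st (R : comPzRingType) : nat -> R := fun n => (n == 1%N)%:R.

Definition poch (R : comPzRingType) (a k : R) (i : nat) : R :=
  \prod_(l < i) (a + k *+ l).

Definition ln1p_coef (n : nat) : rat :=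
  if n is m.+1 then (-1) ^+ m / n%:R else 0.

(* Main.v *)
Require Import Defs.
From mathcomp Require Import all_boot all_order all_algebra.
From mathcomp Require Import ring lra zify.
Import Order.TTheory GRing.Theory Num.Theory.
Local Open Scope ring_scope.

Lemma coefM_top (p q : {poly rat}) (a b : nat) :
  (size p <= a.+1)%N -> (size q <= b.+1)%N -> (p * q)`_(a + b) = p`_a * q`_b.
Proof.
move=> hp hq; rewrite coefM.
have ha : (a < (a + b).+1)%N by rewrite ltnS leq_addr.
rewrite (bigD1 (Ordinal ha)) //= addKn big1 ?addr0 // => i /eqP hi.
have [lt|ge] := ltnP i a.
  rewrite [q`__]nth_default ?mulr0 //.
  apply: leq_trans hq _; lia.
rewrite [p`__]nth_default ?mul0r //; apply: leq_trans hp _.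
have : i != a :> nat by apply/eqP => e; apply: hi; exact: val_inj.
lia.
Qed.

Lemma uniq_rec (x y : nat -> rat) (w : nat -> nat -> rat) :
  (forall j, w j j != 0) ->
  (forall j, \sum_(i < j.+1) x i * w j i = \sum_(i < j.+1) y i * w j i) ->
  forall j, x j = y j.
Proof.
move=> hw hs j; elim/ltn_ind: j => j IH.
have := hs j; rewrite !big_ord_recr /=.
rewrite (eq_bigr (fun i : 'I_j => y i * w j i)); last first.
  by move=> i _; rewrite IH.
by move/addrI/mulIf; apply.
Qed.

Definition P (k : nat) : {poly rat} := poch 1 'X k.

Lemma PS k : P k.+1 = P k * (1 + 'X *+ k).
Proof. by rewrite /P /poch big_ord_recr. Qed.

Lemma P0 : P 0 = 1.
Proof. by rewrite /P /poch big_ord0. Qed.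

Lemma lin_size k : (size (1 + 'X *+ k : {poly rat})%R <= 2)%N.
Proof.
apply: leq_trans (size_polyD _ _) _; rewrite geq_max size_poly1 /=.
by rewrite -scaler_nat; apply: leq_trans (size_scale_leq _ _) _; rewrite size_polyX.
Qed.

Lemma P_size k : (size (P k.+1) <= k.+1)%N.
Proof.
elim: k => [|k IH]; first by rewrite PS P0 mulr0n addr0 mul1r size_poly1.
rewrite PS; apply: leq_trans (size_mul_leq _ _) _.
have h2 := lin_size k.+1.
lia.
Qed.

Lemma P_top k : (P k.+1)`_k = k`!%:R.
Proof.
elim: k => [|k IH]; first by rewrite PS P0 mulr0n addr0 mul1r coefC.
rewrite PS; have := coefM_top _ _ _ _ (P_size k) (lin_size k.+1); rewrite addn1 => ->.
by rewrite IH coefD coefC coefMn coefX /= add0r factS natrM mulrC.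
Qed.

Lemma P_coef0 k : (P k)`_0 = 1.
Proof.
elim: k => [|k IH]; first by rewrite P0 coefC.
by rewrite PS coef0M IH coefD coefC coefMn coefX /= mul0rn addr0 mul1r.
Qed.

Lemma cform (a x : rat) : 0 < a -> 0 <= x ->
  (a + x) / (a + x + 1) * a^-1 - (a + 1)^-1 = x / ((a + x + 1) * a * (a + 1)).
Proof.
move=> ha hx.
have h1 : a != 0 by rewrite gt_eqF.
have h2 : a + 1 != 0 by rewrite gt_eqF //; lra.
have h3 : a + x + 1 != 0 by rewrite gt_eqF //; lra.
by field; rewrite ?h1 ?h2 ?h3.
Qed.

Definition cc (n i : nat) : rat :=
  (n.+1)%:R / (n.+2)%:R * ((n.+1 - i)%:R)^-1 - ((n.+2 - i)%:R)^-1.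

Lemma cc_eq n i : (i <= n)%N ->
  cc n i = i%:R / (((n.+1 - i)%:R + i%:R + 1) * (n.+1 - i)%:R * ((n.+1 - i)%:R + 1)).
Proof.
move=> hi; rewrite -cform ?ler0n //; last by rewrite ltr0n subn_gt0 ltnS.
rewrite /cc -natrD subnK; last by lia.
by rewrite !natr1 -subSn //; lia.
Qed.

Lemma cc_ge0 n i : (i <= n)%N -> 0 <= cc n i.
Proof.
by move=> hi; rewrite cc_eq // divr_ge0 ?ler0n // ?mulr_ge0 ?addr_ge0 ?ler0n.
Qed.

Lemma cc_gt0 n : (0 < n)%N -> 0 < cc n n.
Proof.
move=> hn; rewrite cc_eq // subSnn divr_gt0 ?ltr0n //.
have := ler0n rat n; set x := (n%:R : rat) => hx.
rewrite !mulr_gt0 //; lra.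
Qed.

Lemma cc_0 n : cc n 0 = 0.
Proof. by rewrite cc_eq // mul0r. Qed.


Lemma greg_rec (G : nat -> rat) (hG : forall n, smul G ln1p_coef n = st rat n) m :
  \sum_(i < m.+1) ((-1) ^+ i * G i) * ((m.+1 - i)%:R)^-1 = (m == 0)%:R.
Proof.
have L0 : ln1p_coef 0 = 0 by [].
have := hG m.+1; rewrite /smul /st big_ord_recr subnn L0 mulr0 [X in X = _ -> _]/= addr0.
rewrite (eq_bigr (fun i : 'I_m.+1 => (-1) ^+ m * (((-1) ^+ i * G i) * ((m.+1 - i)%:R)^-1))); last first.
  move=> i _; have hi : (i <= m)%N by rewrite -ltnS.
  rewrite /= (subSn hi) /ln1p_coef -(subSn hi).
  have e : (-1) ^+ m = (-1) ^+ (m - i) * (-1) ^+ i :> rat.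
    by rewrite -exprD subnK.
  rewrite e; set s := (-1) ^+ i : rat.
  have ss : s * s = 1 by rewrite /s -exprD addnn -mul2n exprM expr2 mulrNN mulr1 expr1n.
  rewrite mulrC -!mulrA; congr (_ * _).
  by rewrite mulrCA !mulrA ss mul1r mulrC.
rewrite -mulr_sumr => e.
have ss : (-1) ^+ m * (-1) ^+ m = 1 :> rat by rewrite -exprD addnn -mul2n exprM expr2 mulrNN mulr1 expr1n.
rewrite -[LHS]mul1r -{1}ss -mulrA e.
case: m {e ss} => [|m]; first by rewrite mulr1.
by rewrite mulr0.
Qed.

Lemma neg_h (h : nat -> rat)
  (hr : forall m, \sum_(i < m.+1) h i * ((m.+1 - i)%:R)^-1 = (m == 0)%:R) :
  forall n, h n.+1 < 0.
Proof.
have h0 : h 0%N = 1.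
  by have := hr 0%N; rewrite big_ord1 /= invr1 mulr1.
elim/ltn_ind => n IH.
have R1 := hr n.+1; rewrite big_ord_recr /= subSnn invr1 mulr1 in R1.
case: n IH R1 => [|k] IH R1.
  rewrite big_ord1 /= h0 mul1r subn0 in R1.
  have : 0 < (2%:R : rat)^-1 by rewrite invr_gt0 ltr0n.
  lra.
set n := k.+1 in IH R1 *.
have R0 := hr n.
have key : h n.+1 = \sum_(i < n.+1) h i * cc n i.
  rewrite /cc; under eq_bigr do rewrite mulrBr.
  rewrite sumrB -[X in X - _]mulr1.
  rewrite (eq_bigr (fun i : 'I_n.+1 => ((n.+1)%:R / (n.+2)%:R) * (h i * ((n.+1 - i)%:R)^-1))); last first.
    by move=> i _; rewrite mulrCA !mulrA.
  rewrite -mulr_sumr R0 /= mulr0 add0r.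
  by apply/eqP; rewrite -addr_eq0 addrC R1.
rewrite key big_ord_recr /=.
have A : \sum_(i < n) h (widen_ord (leqnSn n) i) * cc n (widen_ord (leqnSn n) i) <= 0.
  apply: sumr_le0 => -[[|j] hj] _ /=; first by rewrite cc_0 mulr0.
  have := IH j (ltnW hj); have := @cc_ge0 n j.+1 (ltnW hj); nra.
have := IH k (ltnSn k); have := @cc_gt0 n (ltn0Sn k); rewrite -/n; nra.
Qed.

Lemma smul_rec (F : nat -> {poly rat}) n :
  smul (fun m => sone _ m - 'X * st _ m) (sderiv F) n
  = F n.+1 *+ n.+1 - 'X * (F n *+ n).
Proof.
rewrite /smul /sone /st /sderiv; case: n => [|m].
  by rewrite big_ord1 /= subnn !mulr0 !subr0 mul1r.
rewrite big_ord_recl big_ord_recl big1 ?addr0; last first.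
  by move=> i _ /=; rewrite !mulr0 !subr0 mul0r.
rewrite /= subn0 subn1 /= mulr0 subr0 mul1r add0r mulr1 mulNr.
done.
Qed.

Definition Fc (n : nat) : {poly rat} := (n`!%:R)^-1 *: P n.

Lemma Fc_rec n : Fc n.+1 *+ n.+1 - 'X * (Fc n *+ n) = Fc n.
Proof.
rewrite /Fc PS -[X in X - _]scaler_nat scalerA.
have e : n.+1%:R * (n.+1)`!%:R^-1 = (n`!%:R)^-1 :> rat.
  rewrite factS natrM invfM mulrA mulfV ?mul1r //.
  by rewrite pnatr_eq0.
rewrite e scalerAl; set Q := _ *: P n.
ring.
Qed.

Lemma F_eq (F : nat -> {poly rat}) : F 0%N = 1 ->
  (forall n, smul (fun m => sone _ m - 'X * st _ m) (sderiv F) n = F n) ->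
  forall n, F n = Fc n.
Proof.
move=> h0 hr; elim => [|n IH]; first by rewrite h0 /Fc P0 fact0 invr1 scale1r.
have e1 := hr n; rewrite smul_rec in e1.
have e2 := Fc_rec n.
have : F n.+1 *+ n.+1 = Fc n.+1 *+ n.+1.
  apply: (@addIr _ (- ('X * (F n *+ n)))); rewrite e1 IH.
  by rewrite -{1}e2.
rewrite -!scaler_nat; apply: scalerI.
by rewrite pnatr_eq0.
Qed.

Lemma sizeb (b : nat) : (size (b%:R : {poly rat}) <= 1)%N.
Proof. by rewrite -polyC_natr size_polyC leq_b1. Qed.

Theorem lemma4p2 (c : nat -> {poly rat}) (B G : nat -> rat)
  (hc : forall j : nat,
     \sum_(i < j.+1)
        (((j.+1 - i)`!%:R)^-1 *: poch 1 'X (j.+1 - i)) * ((i`!%:R)^-1 *: c i)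
     = (j == 0%N)%:R)
  (hB : forall j : nat, \sum_(i < j.+1) 'C(j.+1, i)%:R * B i = (j == 0%N)%:R)
  (hG : forall n : nat, smul G ln1p_coef n = st rat n) :
  (forall j : nat,
     size (c j) = j.+1 /\
     lead_coef (c j) = (-1) ^+ j * j`!%:R * G j /\
     (c j)`_0 = B j) /\
  (exists F : nat -> {poly rat},
     F 0%N = 1 /\
     forall n, smul (fun m => sone _ m - 'X * st _ m) (sderiv F) n = F n) /\
  (forall F : nat -> {poly rat},
     F 0%N = 1 ->
     (forall n, smul (fun m => sone _ m - 'X * st _ m) (sderiv F) n = F n) ->
     forall n,
       smul (fun j => (j`!%:R)^-1 *: c j) (fun m => F m - sone _ m) n
       = st _ n).
Proof.
have hP1 : P 1 = 1 by rewrite PS P0 mulr0n addr0 mul1r.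
have szc : forall j, (size (c j) <= j.+1)%N.
  elim/ltn_ind => j IH.
  have H := hc j; rewrite big_ord_recr /= subSnn -/(P 1) hP1 invr1 scale1r mul1r in H.
  set S := \sum_(i < j) _ in H.
  have E : j`!%:R^-1 *: c j = (j == 0%N)%:R - S by rewrite -H addrAC subrr add0r.
  have -> : c j = j`!%:R *: (j`!%:R^-1 *: c j).
    by rewrite scalerA mulfV ?scale1r // pnatr_eq0 -lt0n fact_gt0.
  rewrite E; apply: leq_trans (size_scale_leq _ _) _.
  apply: leq_trans (size_polyD _ _) _; rewrite geq_max size_polyN.
  rewrite (leq_trans (sizeb _)) //=.
  apply: leq_trans (size_sum _ _ _) _; apply/bigmax_leqP => i _.
  apply: leq_trans (size_polyMleq _ _) _.
  have h1 : (size ((j.+1 - i)`!%:R^-1 *: poch 1 'X (j.+1 - i) : {poly rat}) <= (j - i).+1)%N.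
    apply: leq_trans (size_scale_leq _ _) _.
    rewrite subSn; last exact: ltnW.
    exact: P_size.
  have h2 : (size (i`!%:R^-1 *: c i) <= i.+1)%N.
    by apply: leq_trans (size_scale_leq _ _) _; apply: IH.
  have hi : (i < j)%N by [].
  move: h1 h2; set s1 := size _; set s2 := size _ => h1 h2; clearbody s1 s2; lia.
have tco : forall j i m, ((((j.+1 - i)`!%:R)^-1 *: poch 1 'X (j.+1 - i)) * ((i`!%:R)^-1 *: c i))`_m
    = ((j.+1 - i)`!%:R)^-1 * (i`!%:R)^-1 * (poch 1 'X (j.+1 - i) * c i)`_m.
  by move=> j i m; rewrite -scalerAl -scalerAr !coefZ mulrA.
have dco : forall j m, (((j == 0%N)%:R : {poly rat})`_m) = ((j == 0%N) && (m == 0%N))%:R.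
  by move=> j m; rewrite -polyC_natr coefC; case: (m == 0%N); case: (j == 0%N).
pose h i := (-1) ^+ i * G i.
have top : forall j, (c j)`_j / (j`!%:R) = h j.
  apply: (@uniq_rec (fun i => (c i)`_i / (i`!%:R)) h (fun j i => ((j.+1 - i)%:R)^-1)).
    by move=> j; rewrite subSnn invr1 oner_neq0.
  move=> j; rewrite /h greg_rec //.
  have := congr1 (fun p : {poly rat} => p`_j) (hc j).
  rewrite coef_sum dco andbb => <-.
  apply: eq_bigr => -[i hi'] _ /=; rewrite tco.
  have hi : (i <= j)%N by rewrite -ltnS.
  have ct : (poch 1 'X (j - i).+1 * c i)`_j = (j - i)`!%:R * (c i)`_i.
    by have := coefM_top _ _ _ _ (P_size (j - i)) (szc i); rewrite subnK // P_top => <-.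
  rewrite (subSn hi) ct.
  rewrite factS natrM.
  have u0 : ((j - i)`!%:R : rat) != 0 by rewrite pnatr_eq0 -lt0n fact_gt0.
  have v0 : (1 + (j - i)%:R : rat) != 0 by rewrite nat1r pnatr_eq0.
  have f0 : (i`!%:R : rat) != 0 by rewrite pnatr_eq0 -lt0n fact_gt0.
  by field; rewrite u0 v0 f0.
have cst : forall j, (c j)`_0 = B j.
  apply: (@uniq_rec (fun i => (c i)`_0) B (fun j i => ((j.+1 - i)`!%:R)^-1 * (i`!%:R)^-1)).
    move=> j; rewrite mulf_neq0 // invr_eq0 pnatr_eq0 -lt0n fact_gt0 //.
  move=> j; transitivity ((j == 0%N)%:R : rat).
    have := congr1 (fun p : {poly rat} => p`_0) (hc j).
    rewrite coef_sum dco andbT => <-.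
    apply: eq_bigr => i _; rewrite tco coef0M.
    by rewrite (P_coef0 (j.+1 - i)) mul1r mulrC.
  have fj0 : ((j.+1)`!%:R : rat) != 0 by rewrite pnatr_eq0 -lt0n fact_gt0.
  transitivity ((j == 0%N)%:R / ((j.+1)`!%:R : rat)).
    by case: j {fj0} => [|j] /=; rewrite ?mul0r // factS fact0 muln1 invr1 mulr1.
  rewrite -(hB j) mulr_suml; apply: eq_bigr => -[i hi'] _ /=.
  have hi : (i <= j.+1)%N by rewrite ltnW.
  have := bin_fact hi; move/(congr1 (fun n => n%:R : rat)); rewrite !natrM => e.
  rewrite -e.
  have u0 : ((j.+1 - i)`!%:R : rat) != 0 by rewrite pnatr_eq0 -lt0n fact_gt0.
  have f0 : (i`!%:R : rat) != 0 by rewrite pnatr_eq0 -lt0n fact_gt0.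
  have b0 : ('C(j.+1, i)%:R : rat) != 0 by rewrite pnatr_eq0 -lt0n bin_gt0.
  by field; rewrite u0 f0 b0.
have hr := @greg_rec G hG.
have h0 : h 0%N = 1.
  by have := hr 0%N; rewrite big_ord1 /= invr1 mulr1.
have hnz : forall j, h j != 0.
  case=> [|j]; first by rewrite h0 oner_neq0.
  by rewrite lt_eqF // (@neg_h h hr j).
have Fc0 : Fc 0%N = 1 by rewrite /Fc P0 fact0 invr1 scale1r.
split.
  move=> j.
  have cj : (c j)`_j = h j * j`!%:R.
    by rewrite -(top j) mulfVK // pnatr_eq0 -lt0n fact_gt0.
  have cjj : (c j)`_j != 0 by rewrite cj mulf_neq0 // pnatr_eq0 -lt0n fact_gt0.
  have sz : size (c j) = j.+1.
    apply/eqP; rewrite eqn_leq szc /= ltnNge; apply/negP => hs.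
    by move: cjj; rewrite nth_default.
  split; first exact: sz.
  split; last exact: cst.
  by rewrite lead_coefE sz /= cj /h mulrAC.
split.
  exists Fc; split; first exact: Fc0.
  by move=> n; rewrite smul_rec Fc_rec.
move=> F hF0 hFr n; rewrite /smul.
rewrite (eq_bigr (fun i : 'I_n.+1 => (i`!%:R^-1 *: c i) * (Fc (n - i) - sone _ (n - i)))); last first.
  by move=> i _; rewrite (@F_eq F hF0 hFr).
case: n => [|m].
  by rewrite big_ord1 /= Fc0 /sone /st /= mulr1n subrr mulr0.
rewrite big_ord_recr /= subnn Fc0 /sone /= mulr1n subrr mulr0 addr0.
rewrite /st /= -(hc m); apply: eq_bigr => -[i hi'] _ /=.
have hi : (i <= m)%N by rewrite -ltnS.
rewrite (subSn hi) /= subr0 mulrC.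
by rewrite /Fc.
Qed.
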